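(* In the setting described in the context, define $\Delta_u(\eta,e_1,e_2):=\hat u(\eta,e_1,e_2)-\hat u(\eta,0,0)$. Fix $\delta>0$. For every $R\in(0,\min\{a,b\})$ there exists $C_R>0$ such that $$|\Delta_u(\eta,e_1,e_2)|\le C_R(|e_1|+|e_2|)$$ for all $\eta\in\mathcal T_R:=\{\eta\in\mathbb{R}^2: r(\eta)\le R\}$ and all $e_1,e_2\in\mathbb{R}$ with $|e_1|+|e_2|\le\delta$.
   Context: Let $A>0$. For $i\in\{1,2\}$ let $k_i,\mu_i,g_i:[0,A]\to\mathbb{R}_{\ge0}$ be continuous with positive integrals over $[0,A]$, and let $\zeta_i>0$ solve $\int_0^Ak_i(a)e^{-\int_0^a(\zeta_i+\mu_i(s))ds}da=1$. For continuous nonnegative $k,\mu,g$ and $\zeta\in\mathbb{R}$: $\mathcal G_\kappa(k,\mu,\zeta)=\int_0^A a k(a)e^{-\int_0^a(\zeta+\mu)}da$, $\mathcal G_\gamma(g,\zeta,\mu)=\int_0^A g(a)e^{-\int_0^a(\zeta+\mu)}da$, $\mathcal G_\pi(k,\mu,\zeta)(a)=\int_a^A k(s)e^{\int_s^a(\zeta+\mu(l))dl}ds$. Let $\langle f,h\rangle=\int_0^Afh$, $n_i(a)=e^{-\int_0^a(\zeta_i+\mu_i)}$, $\gamma_1=\mathcal G_\gamma(g_1,\zeta_2,\mu_2)$, $\gamma_2=\mathcal G_\gamma(g_2,\zeta_1,\mu_1)$. Let $\varepsilon>0$, $\beta>\frac{\varepsilon}{4(1+\varepsilon)}$, $x_1^*(0)>\frac{1}{\zeta_2\gamma_2}$,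 $a:=\frac{1}{x_1^*(0)\gamma_2}$, $b:=\zeta_1-\zeta_2+a=\gamma_1x_2^*(0)>0$ (defining $x_2^*(0)>0$). For $e_1,e_2\in\mathbb{R}$: $\hat\zeta_i=\zeta_i-e_i$, $\hat\kappa_i=\mathcal G_\kappa(k_i,\mu_i,\hat\zeta_i)$, $\hat\gamma_1=\mathcal G_\gamma(g_1,\hat\zeta_2,\mu_2)$, $\hat\gamma_2=\mathcal G_\gamma(g_2,\hat\zeta_1,\mu_1)$, $\hat\pi_{0,i}=\mathcal G_\pi(k_i,\mu_i,\hat\zeta_i)$, and $\hat u(\eta,e_1,e_2)=\hat\zeta_2-\frac{1}{x_1^*(0)\hat\gamma_2}+\beta\big[(1+\varepsilon)(\hat\zeta_2-\hat\zeta_1)-\frac{\varepsilon}{x_1^*(0)\hat\gamma_2}-\frac{\hat\kappa_1}{\hat\gamma_2\langle\hat\pi_{0,1},n_1\rangle x_1^*(0)}e^{-\eta_1}+(1+\varepsilon)\frac{\hat\gamma_1\langle\hat\pi_{0,2},n_2\rangle x_2^*(0)}{\hat\kappa_2}e^{\eta_2}\big]$ for $\eta=(\eta_1,\eta_2)\in\mathbb{R}^2$. Also $\phi_1(\eta_1)=a(1-e^{-\eta_1})$, $\phi_2(\eta_2)=b(e^{\eta_2}-1)$, $r(\eta)=\sqrt{\phi_1(\eta_1)^2+\phi_2(\eta_2)^2}$. *)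

(* Defs.v *)
From Stdlib Require Import Reals.
From Coquelicot Require Import Coquelicot.
Open Scope R_scope.

Definition cont_on_0A (A : R) (f : R -> R) : Prop :=
  forall x, 0 <= x <= A ->
    filterlim f (within (fun y => 0 <= y <= A) (locally x)) (locally (f x)).

Definition surv (z : R) (mu : R -> R) (a : R) : R :=
  exp (- RInt (fun s => z + mu s) 0 a).

Definition Gkappa (A : R) (k mu : R -> R) (z : R) : R :=
  RInt (fun a => a * k a * surv z mu a) 0 A.

Definition Ggamma (A : R) (g : R -> R) (z : R) (mu : R -> R) : R :=
  RInt (fun a => g a * surv z mu a) 0 A.

Definition Gpi (A : R) (k mu : R -> R) (z : R) (a : R) : R :=
  RInt (fun s => k s * exp (RInt (fun l => z + mu l) s a)) a A.

Definition inner (A : R) (f h : R -> R) : R := RInt (fun x => f x * h x) 0 A.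

(* \hat u(eta, e1, e2); x1 = x_1^*(0), x2 = x_2^*(0) *)
Definition uhat (A : R) (k1 k2 mu1 mu2 g1 g2 : R -> R) (z1 z2 beta eps x1 x2 : R)
    (eta1 eta2 e1 e2 : R) : R :=
  let hz1 := z1 - e1 in
  let hz2 := z2 - e2 in
  let hk1 := Gkappa A k1 mu1 hz1 in
  let hk2 := Gkappa A k2 mu2 hz2 in
  let hg1 := Ggamma A g1 hz2 mu2 in
  let hg2 := Ggamma A g2 hz1 mu1 in
  let hp1 := Gpi A k1 mu1 hz1 in
  let hp2 := Gpi A k2 mu2 hz2 in
  let n1 := surv z1 mu1 in
  let n2 := surv z2 mu2 in
  hz2 - 1 / (x1 * hg2)
  + beta * ((1 + eps) * (hz2 - hz1) - eps / (x1 * hg2)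
            - hk1 / (hg2 * inner A hp1 n1 * x1) * exp (- eta1)
            + (1 + eps) * (hg1 * inner A hp2 n2 * x2) / hk2 * exp eta2).

(* Main.v *)
Require Import Defs.
From Stdlib Require Import Reals Lra.
From Coquelicot Require Import Coquelicot.
Open Scope R_scope.

Lemma cmul (f g : R -> R) x : continuous f x -> continuous g x -> continuous (fun y => f y * g y) x.
Proof. intros; exact (continuous_mult f g x H H0). Qed.
Lemma cplus (f g : R -> R) x : continuous f x -> continuous g x -> continuous (fun y => f y + g y) x.
Proof. intros; exact (continuous_plus f g x H H0). Qed.
Lemma copp (f : R -> R) x : continuous f x -> continuous (fun y => - f y) x.
Proof. intros; exact (continuous_opp f x H). Qed.
Lemma cexp (f : R -> R) x : continuous f x -> continuous (fun y => exp (f y)) x.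
Proof. intros; exact (continuous_exp_comp f x H). Qed.
Lemma cconst (c x : R) : continuous (fun _ : R => c) x.
Proof. exact (continuous_const c x). Qed.
Lemma cid (x : R) : continuous (fun y : R => y) x.
Proof. exact (continuous_id x). Qed.

Definition cl (A x : R) := Rmin A (Rmax 0 x).
Lemma cl_in A x : 0 <= A -> 0 <= cl A x <= A.
Proof. intros; unfold cl, Rmin, Rmax; repeat destruct Rle_dec; lra. Qed.
Lemma cl_id A x : 0 <= x <= A -> cl A x = x.
Proof. intros; unfold cl, Rmin, Rmax; repeat destruct Rle_dec; lra. Qed.
Lemma cl_lip A x y : 0 <= A -> Rabs (cl A x - cl A y) <= Rabs (x - y).
Proof. intros; unfold cl, Rmin, Rmax; repeat destruct Rle_dec; unfold Rabs; repeat destruct Rcase_abs; lra. Qed.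

Lemma ball_R (x e y : R) : ball x e y <-> Rabs (y - x) < e.
Proof. reflexivity. Qed.

Lemma cont_ext A f : 0 <= A -> cont_on_0A A f -> forall x, continuous (fun y => f (cl A y)) x.
Proof.
  intros HA Hf x. unfold continuous.
  eapply filterlim_comp; [| apply (Hf (cl A x) (cl_in A x HA))].
  intros P HP. unfold filtermap. destruct HP as [eps He].
  exists eps. intros y Hy. apply He; [| apply cl_in; auto].
  apply ball_R. apply ball_R in Hy. eapply Rle_lt_trans; [apply cl_lip; auto| auto].
Qed.

Lemma exR (f : R -> R) u v : (forall x, continuous f x) -> ex_RInt f u v.
Proof. intros; apply (ex_RInt_continuous (V:=R_CompleteNormedModule)); auto. Qed.
Lemma RInt_plusR (f g : R -> R) u v : ex_RInt f u v -> ex_RInt g u v ->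
  RInt (fun t => f t + g t) u v = RInt f u v + RInt g u v :> R.
Proof. intros; exact (RInt_plus f g u v H H0). Qed.
Lemma RInt_minusR (f g : R -> R) u v : ex_RInt f u v -> ex_RInt g u v ->
  RInt (fun t => f t - g t) u v = RInt f u v - RInt g u v :> R.
Proof. intros; exact (RInt_minus f g u v H H0). Qed.
Lemma RInt_scalR (f : R -> R) u v c : ex_RInt f u v ->
  RInt (fun t => c * f t) u v = c * RInt f u v :> R.
Proof. intros; exact (RInt_scal f u v c H). Qed.
Lemma RInt_constR u v c : RInt (fun _ => c) u v = (v - u) * c :> R.
Proof. exact (RInt_const u v c). Qed.
Lemma ChaslesR (f : R -> R) u v w : ex_RInt f u v -> ex_RInt f v w ->
  RInt f u v + RInt f v w = RInt f u w :> R.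
Proof. intros; exact (RInt_Chasles f u v w H H0). Qed.

Lemma bnd (f : R -> R) u v : u <= v -> (forall x, continuous f x) ->
  exists B, 0 <= B /\ forall x, u <= x <= v -> Rabs (f x) <= B.
Proof.
  intros Huv Hc.
  destruct (continuity_ab_maj f u v Huv) as [M1 [H1 _]].
  { intros; apply continuity_pt_filterlim; apply Hc. }
  destruct (continuity_ab_min f u v Huv) as [M2 [H2 _]].
  { intros; apply continuity_pt_filterlim; apply Hc. }
  exists (Rabs (f M1) + Rabs (f M2)); split.
  - pose proof (Rabs_pos (f M1)); pose proof (Rabs_pos (f M2)); lra.
  - intros x Hx; specialize (H1 x Hx); specialize (H2 x Hx).
    unfold Rabs; repeat destruct Rcase_abs; lra.
Qed.

Lemma lowb (f : R -> R) u v : u <= v -> (forall x, continuous f x) ->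
  (forall x, u <= x <= v -> 0 < f x) ->
  exists m, 0 < m /\ forall x, u <= x <= v -> m <= f x.
Proof.
  intros Huv Hc Hp.
  destruct (continuity_ab_min f u v Huv) as [M2 [H2 HM]].
  { intros; apply continuity_pt_filterlim; apply Hc. }
  exists (f M2); split; auto.
Qed.

Lemma exp_le x y : x <= y -> exp x <= exp y.
Proof. intros [H|H]; [left; apply exp_increasing; auto | subst; lra]. Qed.

Lemma exp_lip x : Rabs (exp x - 1) <= Rabs x * exp (Rabs x).
Proof.
  pose proof (exp_ineq1_le x). pose proof (exp_ineq1_le (-x)).
  pose proof (exp_pos x). pose proof (exp_pos (-x)).
  assert (E : exp x * exp (-x) = 1) by (rewrite <- exp_plus; replace (x + - x) with 0 by ring; apply exp_0).
  assert (F1 : exp x * (1 - x) <= 1) by nra.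
  unfold Rabs; repeat destruct Rcase_abs; try nra.
Qed.

Lemma exp_lip2 e x d X : Rabs e <= d -> Rabs x <= X ->
  Rabs (exp (e * x) - 1) <= Rabs e * (X * exp (d * X)).
Proof.
  intros He Hx. eapply Rle_trans; [apply exp_lip|].
  rewrite Rabs_mult.
  assert (0 <= Rabs e) by apply Rabs_pos. assert (0 <= Rabs x) by apply Rabs_pos.
  assert (exp (Rabs e * Rabs x) <= exp (d * X)) by (apply exp_le; apply Rmult_le_compat; lra).
  pose proof (exp_pos (Rabs e * Rabs x)).
  assert (Rabs e * Rabs x * exp (Rabs e * Rabs x) <= Rabs e * X * exp (d * X)).
  { apply Rmult_le_compat; try nra. }
  lra.
Qed.

Lemma lip_RInt (f g : R -> R) u v L : u <= v -> ex_RInt f u v -> ex_RInt g u v ->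
  (forall x, u <= x <= v -> Rabs (f x - g x) <= L) ->
  Rabs (RInt f u v - RInt g u v) <= (v - u) * L.
Proof.
  intros. rewrite <- RInt_minusR by auto. apply abs_RInt_le_const; auto.
  apply (ex_RInt_minus (V:=R_NormedModule)); auto.
Qed.

Lemma pos_point (f : R -> R) A c : 0 < A -> (forall x, continuous f x) ->
  (forall x, 0 <= x <= A -> 0 <= f x) -> 0 <= c <= A -> 0 < f c -> 0 < RInt f 0 A.
Proof.
  intros HA Hc Hp Hcin Hfc.
  pose proof (Hc c) as Hcc. unfold continuous in Hcc.
  assert (Hpos : 0 < f c / 2) by lra.
  apply filterlim_locally with (eps := mkposreal _ Hpos) in Hcc.
  destruct Hcc as [rho Hr].
  set (u := Rmax 0 (c - rho/2)). set (v := Rmin A (c + rho/2)).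
  pose proof (cond_pos rho).
  assert (Hu : 0 <= u <= c) by (unfold u, Rmax; destruct Rle_dec; lra).
  assert (Hv : c <= v <= A) by (unfold v, Rmin; destruct Rle_dec; lra).
  assert (Huv : u < v).
  { unfold u, v, Rmax, Rmin; repeat destruct Rle_dec; lra. }
  rewrite <- (ChaslesR f 0 u A) by (apply exR; auto).
  rewrite <- (ChaslesR f u v A) by (apply exR; auto).
  assert (0 <= RInt f 0 u) by (apply RInt_ge_0; try lra; [apply exR; auto| intros; apply Hp; lra]).
  assert (0 <= RInt f v A) by (apply RInt_ge_0; try lra; [apply exR; auto| intros; apply Hp; lra]).
  assert (0 < RInt f u v).
  { apply RInt_gt_0; auto. intros x Hx.
    assert (Hb : ball c rho x).
    { apply ball_R. assert (x - c < rho/2 + 0 /\ c - x < rho/2).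
      { unfold u, v, Rmax, Rmin in *; repeat destruct Rle_dec; lra. }
      unfold Rabs; destruct Rcase_abs; lra. }
    specialize (Hr x Hb). apply ball_R in Hr. change (Rabs (f x - f c) < f c / 2) in Hr.
    unfold Rabs in Hr; destruct Rcase_abs; lra. }
  lra.
Qed.

Definition Mu A (mu : R -> R) x := RInt (fun y => mu (cl A y)) 0 x.
Definition N A mu z x := exp (-(z * x + Mu A mu x)).

Lemma cminus (f g : R -> R) x : continuous f x -> continuous g x -> continuous (fun y => f y - g y) x.
Proof. intros; apply cplus; auto; apply copp; auto. Qed.
Lemma cmulc (c x : R) : continuous (Rmult c) x.
Proof. apply (cmul (fun _ => c) (fun y => y)); [apply cconst | apply cid]. Qed.
Lemma cminc (c x : R) : continuous (Rminus c) x.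
Proof. apply (cminus (fun _ => c) (fun y => y)); [apply cconst | apply cid]. Qed.
Ltac cont0 := repeat match goal with
 | |- continuous (Rminus _) _ => apply cminc
 | |- continuous (Rmult _) _ => apply cmulc
 | |- continuous (fun _ => ?c) _ => apply cconst
 | |- continuous (fun y => y) _ => apply cid
 | |- continuous (fun y => _ * _) _ => apply cmul
 | |- continuous (fun y => _ + _) _ => apply cplus
 | |- continuous (fun y => _ - _) _ => apply cminus
 | |- continuous (fun y => - _) _ => apply copp
 | |- continuous (fun y => exp _) _ => apply cexp
end.

Ltac cont := cont0.
Lemma Mu_cont A mu : 0 < A -> cont_on_0A A mu -> forall x, continuous (Mu A mu) x.
Proof.
  intros HA Hm x.
  apply (continuous_RInt_1 (fun y => mu (cl A y)) 0 x (Mu A mu)).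
  apply filter_forall. intros; unfold Mu; apply (RInt_correct (V:=R_CompleteNormedModule)); apply exR, cont_ext; auto; lra.
Qed.

Lemma N_cont A mu z : 0 < A -> cont_on_0A A mu -> forall x, continuous (N A mu z) x.
Proof.
  intros HA Hm x. unfold N. cont. apply Mu_cont; auto.
Qed.

Lemma Mu_diff A mu c s a : 0 < A -> cont_on_0A A mu -> 0 <= s <= A -> 0 <= a <= A ->
  RInt (fun l => c + mu l) s a = c * (a - s) + (Mu A mu a - Mu A mu s) :> R.
Proof.
  intros HA Hm Hs Ha.
  rewrite (RInt_ext _ (fun l => c + mu (cl A l))).
  2:{ intros x Hx. rewrite cl_id; auto. unfold Rmin, Rmax in Hx; destruct Rle_dec; lra. }
  rewrite RInt_plusR; [| apply exR; intros; apply cconst | apply exR, cont_ext; auto; lra].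
  rewrite RInt_constR. unfold Mu.
  rewrite <- (ChaslesR (fun y => mu (cl A y)) 0 s a) by (apply exR, cont_ext; auto; lra).
  ring.
Qed.

Lemma surv_N A mu z x : 0 < A -> cont_on_0A A mu -> 0 <= x <= A -> surv z mu x = N A mu z x.
Proof.
  intros. assert (H2 : Mu A mu 0 = 0) by (unfold Mu; exact (RInt_point (V:=R_CompleteNormedModule) 0 _)).
  unfold surv, N. rewrite (Mu_diff A mu z 0 x) by (auto; lra).
  rewrite H2. f_equal. ring.
Qed.

Ltac side := match goal with
 | |- continuous (Mu _ _) _ => apply Mu_cont; auto
 | |- continuous (N _ _ _) _ => apply N_cont; auto
 | |- continuous (fun y => _ (cl _ y)) _ => apply cont_ext; [lra | auto]
 | _ => auto
end.
Ltac cont ::= cont0; try side.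

Lemma N_shift A mu z e x : N A mu (z - e) x = N A mu z x * exp (e * x).
Proof. unfold N. rewrite <- exp_plus. f_equal. ring. Qed.

Lemma N_pos A mu z x : 0 < N A mu z x.
Proof. apply exp_pos. Qed.

Lemma RInt_extR (f g : R -> R) a b : (forall x, Rmin a b < x < Rmax a b -> f x = g x) ->
  RInt f a b = RInt g a b :> R.
Proof. apply RInt_ext. Qed.

Definition Lip (d : R) (f : R -> R) :=
  exists C, 0 <= C /\ forall e, Rabs e <= d -> Rabs (f e - f 0) <= C * Rabs e.

Lemma abs_prod_le e a d A : Rabs e <= d -> 0 <= a <= A -> Rabs (e * a) <= d * A.
Proof.
  intros. rewrite Rabs_mult. rewrite (Rabs_right a) by lra.
  apply Rmult_le_compat; try lra; apply Rabs_pos.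
Qed.

Lemma exp_lowb e a d A : Rabs e <= d -> 0 <= a <= A -> exp (- (d * A)) <= exp (e * a).
Proof.
  intros. apply exp_le. pose proof (abs_prod_le e a d A H H0).
  unfold Rabs in H1; destruct Rcase_abs; lra.
Qed.

Lemma G_rep A mu c ct z e : 0 < A -> cont_on_0A A mu ->
  (forall x, 0 <= x <= A -> c x = ct x) ->
  RInt (fun a => c a * surv (z - e) mu a) 0 A = RInt (fun a => ct a * N A mu z a * exp (e * a)) 0 A :> R.
Proof.
  intros HA Hm Hc. apply RInt_extR. intros x Hx.
  rewrite Rmin_left in Hx by lra. rewrite Rmax_right in Hx by lra.
  rewrite (surv_N A) by (auto; lra). rewrite N_shift, Hc by lra. ring.
Qed.

Lemma G_lip A mu c ct z d : 0 < A -> cont_on_0A A mu -> (forall x, continuous ct x) ->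
  (forall x, 0 <= x <= A -> c x = ct x) -> 0 < d ->
  Lip d (fun e => RInt (fun a => c a * surv (z - e) mu a) 0 A).
Proof.
  intros HA Hm Hct Hc Hd.
  destruct (bnd (fun a => ct a * N A mu z a) 0 A) as [B [HB HBb]]; [lra| intros; cont; auto; apply N_cont; auto|].
  exists (A * (B * (A * exp (d * A)))). split.
  { apply Rmult_le_pos; [lra|]. apply Rmult_le_pos; [lra|]. apply Rmult_le_pos; [lra| left; apply exp_pos]. }
  intros e He. cbv beta. rewrite !G_rep with (ct := ct) by auto.
  eapply Rle_trans.
  { apply lip_RInt with (L := B * (Rabs e * (A * exp (d * A)))); [lra| apply exR; intros; cont; auto; apply N_cont; auto
    | apply exR; intros; cont; auto; apply N_cont; auto |].
    intros x Hx.
    replace (ct x * N A mu z x * exp (e * x) - ct x * N A mu z x * exp (0 * x))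
      with ((ct x * N A mu z x) * (exp (e * x) - 1)) by (rewrite Rmult_0_l, exp_0; ring).
    rewrite Rabs_mult. apply Rmult_le_compat; try apply Rabs_pos; auto.
    apply exp_lip2; auto. rewrite Rabs_right; lra. }
  rewrite Rminus_0_r. right. ring.
Qed.

Lemma G_low A mu c ct z d : 0 < A -> cont_on_0A A mu -> (forall x, continuous ct x) ->
  (forall x, 0 <= x <= A -> c x = ct x) -> 0 < d ->
  (forall x, 0 <= x <= A -> 0 <= c x) -> 0 < RInt c 0 A ->
  exists m, 0 < m /\ forall e, Rabs e <= d -> m <= RInt (fun a => c a * surv (z - e) mu a) 0 A.
Proof.
  intros HA Hm Hct Hc Hd Hc0 HI.
  destruct (lowb (N A mu z) 0 A) as [nu [Hnu Hnub]]; [lra| apply N_cont; auto| intros; apply N_pos|].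
  assert (E : RInt c 0 A = RInt ct 0 A :> R).
  { apply RInt_extR; intros x Hx. rewrite Rmin_left in Hx by lra. rewrite Rmax_right in Hx by lra. apply Hc; lra. }
  exists (nu * exp (- (d * A)) * RInt c 0 A). split.
  { pose proof (exp_pos (- (d*A))). apply Rmult_lt_0_compat; auto. apply Rmult_lt_0_compat; auto. }
  intros e He. rewrite G_rep with (ct := ct) by auto.
  rewrite E, <- RInt_scalR by (apply exR; auto).
  apply RInt_le; [lra | apply exR; intros; cont; auto | apply exR; intros; cont; auto; apply N_cont; auto |].
  intros x Hx. rewrite <- Hc by lra.
  assert (0 <= c x) by (apply Hc0; lra).
  assert (nu <= N A mu z x) by (apply Hnub; lra).
  assert (exp (- (d * A)) <= exp (e * x)) by (apply exp_lowb; auto; lra).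
  pose proof (exp_pos (- (d*A))).
  replace (c x * N A mu z x * exp (e * x)) with (c x * (N A mu z x * exp (e * x))) by ring.
  replace (nu * exp (- (d * A)) * c x) with (c x * (nu * exp (- (d * A)))) by ring.
  apply Rmult_le_compat_l; auto. apply Rmult_le_compat; lra.
Qed.


Definition Jf A k mu z e a :=
  RInt (fun s => k (cl A s) * N A mu z s * exp (e * (s - a))) a A.

Lemma Gpi_rep A k mu z e a : 0 < A -> cont_on_0A A k -> cont_on_0A A mu -> 0 <= a <= A ->
  Gpi A k mu (z - e) a * surv z mu a = Jf A k mu z e a.
Proof.
  intros HA Hk Hm Ha. unfold Gpi, Jf. rewrite (surv_N A) by auto.
  rewrite (RInt_extR (fun s => k s * exp (RInt (fun l => z - e + mu l) s a))
     (fun s => k (cl A s) * exp ((z - e) * (a - s) + (Mu A mu a - Mu A mu s)))).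
  2:{ intros x Hx. rewrite Rmin_left in Hx by lra. rewrite Rmax_right in Hx by lra.
      rewrite (Mu_diff A) by (auto; lra). rewrite cl_id by lra. reflexivity. }
  rewrite Rmult_comm, <- RInt_scalR.
  2:{ apply exR; intros; cont. }
  apply RInt_extR. intros s _.
  assert (E : N A mu z a * exp ((z - e) * (a - s) + (Mu A mu a - Mu A mu s)) =
              N A mu z s * exp (e * (s - a))).
  { unfold N. rewrite <- !exp_plus. f_equal. ring. }
  transitivity (k (cl A s) * (N A mu z a * exp ((z - e) * (a - s) + (Mu A mu a - Mu A mu s)))); [ring|].
  rewrite E. ring.
Qed.

Lemma inner_rep A k mu z e : 0 < A -> cont_on_0A A k -> cont_on_0A A mu ->
  inner A (Gpi A k mu (z - e)) (surv z mu) = RInt (fun a => Jf A k mu z e a) 0 A.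
Proof.
  intros. unfold inner. apply RInt_extR. intros x Hx.
  rewrite Rmin_left in Hx by lra. rewrite Rmax_right in Hx by lra.
  apply Gpi_rep; auto; lra.
Qed.

Lemma Jf_cont A k mu z e : 0 < A -> cont_on_0A A k -> cont_on_0A A mu ->
  forall x, continuous (Jf A k mu z e) x.
Proof.
  intros HA Hk Hm x.
  set (h := fun s => k (cl A s) * N A mu z s * exp (e * s)).
  assert (Hh : forall y, continuous h y).
  { intros; unfold h; cont. }
  apply continuous_ext with (f := fun a => exp (- (e * a)) * RInt h a A).
  { intros a. unfold Jf. rewrite <- RInt_scalR by (apply exR; auto).
    apply RInt_extR. intros s _. unfold h.
    replace (e * (s - a)) with (e * s + - (e * a)) by ring. rewrite exp_plus. ring. }
  apply cmul.
  - cont.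
  - apply (continuous_RInt_2 h x A (fun a => RInt h a A)).
    apply filter_forall. intros; apply (RInt_correct (V:=R_CompleteNormedModule)); apply exR; auto.
Qed.

Lemma I_lip A k mu z d : 0 < A -> cont_on_0A A k -> cont_on_0A A mu -> 0 < d ->
  Lip d (fun e => inner A (Gpi A k mu (z - e)) (surv z mu)).
Proof.
  intros HA Hk Hm Hd.
  set (w := fun s => k (cl A s) * N A mu z s).
  destruct (bnd w 0 A) as [B [HB HBb]]; [lra| intros; unfold w; cont|].
  set (K := B * (A * exp (d * A))).
  assert (HK : 0 <= K).
  { unfold K. apply Rmult_le_pos; [lra|]. apply Rmult_le_pos; [lra| left; apply exp_pos]. }
  exists (A * (A * K)). split.
  { apply Rmult_le_pos; [lra|]. apply Rmult_le_pos; lra. }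
  intros e He. cbv beta. rewrite !inner_rep by auto.
  eapply Rle_trans.
  { apply lip_RInt with (L := A * (K * Rabs e)); [lra| apply exR, Jf_cont; auto | apply exR, Jf_cont; auto |].
    intros a Ha. unfold Jf.
    eapply Rle_trans.
    { apply lip_RInt with (L := K * Rabs e); [lra | apply exR; intros; cont | apply exR; intros; cont |].
      intros s Hs.
      replace (k (cl A s) * N A mu z s * exp (e * (s - a)) - k (cl A s) * N A mu z s * exp (0 * (s - a)))
        with (w s * (exp (e * (s - a)) - 1)) by (unfold w; rewrite Rmult_0_l, exp_0; ring).
      rewrite Rabs_mult.
      replace (K * Rabs e) with (B * (Rabs e * (A * exp (d * A)))) by (unfold K; ring).
      apply Rmult_le_compat; try apply Rabs_pos.
      - apply HBb; lra.
      - apply exp_lip2; auto. rewrite Rabs_right; lra. }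
    apply Rmult_le_compat_r; [| lra].
    pose proof (Rabs_pos e). apply Rmult_le_pos; lra. }
  rewrite Rminus_0_r. right. ring.
Qed.

Lemma I_low A k mu z d : 0 < A -> cont_on_0A A k -> cont_on_0A A mu -> 0 < d ->
  (forall x, 0 <= x <= A -> 0 <= k x) -> 0 < RInt (fun a => k a * surv z mu a) 0 A ->
  exists m, 0 < m /\ forall e, Rabs e <= d -> m <= inner A (Gpi A k mu (z - e)) (surv z mu).
Proof.
  intros HA Hk Hm Hd Hk0 HI.
  set (w := fun s => k (cl A s) * N A mu z s).
  assert (Hw : forall y, continuous w y).
  { intros; unfold w; cont. }
  assert (Hw0 : forall s, 0 <= s <= A -> 0 <= w s).
  { intros. unfold w. rewrite cl_id by lra. pose proof (N_pos A mu z s). pose proof (Hk0 s H). nra. }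
  set (V := fun a => RInt w a A).
  assert (HV : forall y, continuous V y).
  { intros y. apply (continuous_RInt_2 w y A V).
    apply filter_forall. intros; apply (RInt_correct (V:=R_CompleteNormedModule)); apply exR; auto. }
  assert (HVp : 0 < RInt V 0 A).
  { apply (pos_point V A 0); auto; try lra.
    - intros x Hx. unfold V. apply RInt_ge_0; [lra| apply exR; auto| intros; apply Hw0; lra].
    - unfold V. replace (RInt w 0 A) with (RInt (fun a => k a * surv z mu a) 0 A); auto.
      apply RInt_extR. intros x Hx. rewrite Rmin_left in Hx by lra. rewrite Rmax_right in Hx by lra.
      unfold w. rewrite cl_id by lra. rewrite (surv_N A) by (auto; lra). reflexivity. }
  exists (exp (- (d * A)) * RInt V 0 A). split.
  { apply Rmult_lt_0_compat; auto. apply exp_pos. }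
  intros e He. rewrite inner_rep by auto.
  rewrite <- RInt_scalR by (apply exR; auto).
  apply RInt_le; [lra | apply exR; intros; cont | apply exR, Jf_cont; auto |].
  intros a Ha. unfold V, Jf. rewrite <- RInt_scalR by (apply exR; auto).
  apply RInt_le; [lra | apply exR; intros; cont | apply exR; intros; cont |].
  intros s Hs. fold (w s).
  assert (0 <= w s) by (apply Hw0; lra).
  assert (exp (- (d * A)) <= exp (e * (s - a))) by (apply exp_lowb; auto; lra).
  unfold w in *. nra.
Qed.

From Stdlib Require Import Classical.

Lemma K_pos A k : 0 < A -> cont_on_0A A k -> (forall x, 0 <= x <= A -> 0 <= k x) ->
  0 < RInt k 0 A -> 0 < RInt (fun a => a * k a) 0 A.
Proof.
  intros HA Hk Hk0 HI.
  set (kt := fun y => k (cl A y)).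
  assert (Hkt : forall y, continuous kt y) by (intros; unfold kt; cont).
  assert (E1 : RInt (fun a => a * k a) 0 A = RInt (fun a => a * kt a) 0 A :> R).
  { apply RInt_extR. intros x Hx. rewrite Rmin_left in Hx by lra. rewrite Rmax_right in Hx by lra.
    unfold kt; rewrite cl_id by lra; reflexivity. }
  assert (E2 : RInt k 0 A = RInt kt 0 A :> R).
  { apply RInt_extR. intros x Hx. rewrite Rmin_left in Hx by lra. rewrite Rmax_right in Hx by lra.
    unfold kt; rewrite cl_id by lra; reflexivity. }
  rewrite E1. destruct (classic (exists c, 0 <= c <= A /\ 0 < c * kt c)) as [[c [Hc Hcp]]|Hn].
  - apply (pos_point (fun a => a * kt a) A c); auto.
    + intros; cont.
    + intros x Hx. unfold kt. rewrite cl_id by lra. pose proof (Hk0 x Hx). nra.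
  - exfalso. assert (RInt kt 0 A <= RInt (fun _ => 0) 0 A).
    { apply RInt_le; [lra| apply exR; auto| apply exR; intros; cont|].
      intros x Hx. destruct (Rle_dec (kt x) 0); auto. exfalso; apply Hn. exists x; split; [lra|].
      apply Rmult_lt_0_compat; lra. }
    rewrite RInt_constR in H. lra.
Qed.

Lemma Lip_const d c : Lip d (fun _ => c).
Proof. exists 0. split; [lra|]. intros. unfold Rminus. rewrite Rplus_opp_r, Rabs_R0. lra. Qed.

Lemma Lip_id d : Lip d (fun e => e).
Proof. exists 1. split; [lra|]. intros. rewrite Rminus_0_r. lra. Qed.

Lemma Lip_plus d f g : Lip d f -> Lip d g -> Lip d (fun e => f e + g e).
Proof.
  intros [Cf [Hf0 Hf]] [Cg [Hg0 Hg]]. exists (Cf + Cg). split; [lra|].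
  intros e He. replace (f e + g e - (f 0 + g 0)) with ((f e - f 0) + (g e - g 0)) by ring.
  eapply Rle_trans; [apply Rabs_triang|]. specialize (Hf e He); specialize (Hg e He). lra.
Qed.

Lemma Lip_mult d f g : 0 < d -> Lip d f -> Lip d g -> Lip d (fun e => f e * g e).
Proof.
  intros Hd [Cf [Hf0 Hf]] [Cg [Hg0 Hg]].
  exists ((Rabs (f 0) + Cf * d) * Cg + Rabs (g 0) * Cf). split.
  { pose proof (Rabs_pos (f 0)); pose proof (Rabs_pos (g 0)).
    apply Rplus_le_le_0_compat; apply Rmult_le_pos; nra. }
  intros e He. specialize (Hf e He); specialize (Hg e He).
  replace (f e * g e - f 0 * g 0) with (f e * (g e - g 0) + g 0 * (f e - f 0)) by ring.
  eapply Rle_trans; [apply Rabs_triang|]. rewrite !Rabs_mult.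
  assert (Hfe : Rabs (f e) <= Rabs (f 0) + Cf * d).
  { replace (f e) with (f 0 + (f e - f 0)) by ring. eapply Rle_trans; [apply Rabs_triang|].
    pose proof (Rabs_pos e). nra. }
  pose proof (Rabs_pos e). pose proof (Rabs_pos (f e)). pose proof (Rabs_pos (g 0)).
  pose proof (Rabs_pos (g e - g 0)). pose proof (Rabs_pos (f e - f 0)).
  assert (Rabs (f e) * Rabs (g e - g 0) <= (Rabs (f 0) + Cf * d) * (Cg * Rabs e)) by (apply Rmult_le_compat; auto).
  assert (Rabs (g 0) * Rabs (f e - f 0) <= Rabs (g 0) * (Cf * Rabs e)) by (apply Rmult_le_compat_l; auto).
  nra.
Qed.

Lemma Lip_inv d f m : 0 < m -> Lip d f -> (forall e, Rabs e <= d -> m <= Rabs (f e)) -> 0 <= d ->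
  Lip d (fun e => / f e).
Proof.
  intros Hm [Cf [Hf0 Hf]] Hlow Hd.
  exists (Cf * (/ m * / m)). split.
  { apply Rmult_le_pos; auto. pose proof (Rinv_0_lt_compat m Hm). nra. }
  intros e He.
  assert (H0 : m <= Rabs (f 0)) by (apply Hlow; rewrite Rabs_R0; lra).
  assert (He' := Hlow e He).
  assert (f e <> 0) by (intro Hz; rewrite Hz, Rabs_R0 in He'; lra).
  assert (f 0 <> 0) by (intro Hz; rewrite Hz, Rabs_R0 in H0; lra).
  replace (/ f e - / f 0) with ((f 0 - f e) * (/ f e * / f 0)) by (field; auto).
  rewrite !Rabs_mult, !Rabs_inv.
  assert (/ Rabs (f e) <= / m) by (apply Rinv_le_contravar; lra).
  assert (/ Rabs (f 0) <= / m) by (apply Rinv_le_contravar; lra).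
  assert (Hx : / Rabs (f e) * / Rabs (f 0) <= / m * / m).
  { apply Rmult_le_compat; auto; left; apply Rinv_0_lt_compat; lra. }
  rewrite <- Rabs_Ropp. replace (- (f 0 - f e)) with (f e - f 0) by ring.
  specialize (Hf e He).
  pose proof (Rabs_pos (f e - f 0)). pose proof (Rabs_pos e).
  assert (0 <= / Rabs (f e) * / Rabs (f 0)).
  { apply Rmult_le_pos; left; apply Rinv_0_lt_compat; lra. }
  eapply Rle_trans. { apply Rmult_le_compat; eauto. }
  right; ring.
Qed.

Lemma final_ineq s t P Q1 Q2 E1 E2 be ep Cp Cq1 Cq2 :
  0 < E1 <= 2 -> 0 < E2 <= 2 -> 0 <= ep -> 0 <= Cp -> 0 <= Cq1 -> 0 <= Cq2 ->
  Rabs P <= Cp * Rabs s -> Rabs Q1 <= Cq1 * Rabs s -> Rabs Q2 <= Cq2 * Rabs t ->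
  Rabs (- t + - P + be * ((1 + ep) * (s - t) - ep * P - E1 * Q1 + (1 + ep) * E2 * Q2))
  <= (1 + Cp + Rabs be * ((1 + ep) + ep * Cp + 2 * Cq1 + 2 * (1 + ep) * Cq2)) * (Rabs s + Rabs t).
Proof.
  intros HE1 HE2 Hep HCp HCq1 HCq2 HP HQ1 HQ2.
  pose proof (Rabs_pos s) as Hs. pose proof (Rabs_pos t) as Ht. pose proof (Rabs_pos be) as Hb.
  set (W := (1 + ep) * (s - t) - ep * P - E1 * Q1 + (1 + ep) * E2 * Q2).
  assert (H1 : Rabs ((1 + ep) * (s - t)) <= (1 + ep) * (Rabs s + Rabs t)).
  { rewrite Rabs_mult, (Rabs_right (1 + ep)) by lra. apply Rmult_le_compat_l; [lra|].
    unfold Rminus. eapply Rle_trans; [apply Rabs_triang|]. rewrite Rabs_Ropp. lra. }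
  assert (H2 : Rabs (ep * P) <= ep * Cp * Rabs s).
  { rewrite Rabs_mult, (Rabs_right ep) by lra. rewrite Rmult_assoc. apply Rmult_le_compat_l; lra. }
  assert (H3 : Rabs (E1 * Q1) <= 2 * Cq1 * Rabs s).
  { rewrite Rabs_mult, (Rabs_right E1) by lra. rewrite Rmult_assoc. apply Rmult_le_compat; try lra; apply Rabs_pos. }
  assert (H4 : Rabs ((1 + ep) * E2 * Q2) <= 2 * (1 + ep) * Cq2 * Rabs t).
  { rewrite !Rabs_mult, (Rabs_right E2), (Rabs_right (1 + ep)) by lra.
    replace (2 * (1 + ep) * Cq2 * Rabs t) with ((1 + ep) * 2 * (Cq2 * Rabs t)) by ring.
    apply Rmult_le_compat; try lra; try apply Rabs_pos; try nra. }
  assert (HW : Rabs W <= (1 + ep) * (Rabs s + Rabs t) + ep * Cp * Rabs s + 2 * Cq1 * Rabs s + 2 * (1 + ep) * Cq2 * Rabs t).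
  { replace W with ((1 + ep) * (s - t) + - (ep * P) + - (E1 * Q1) + (1 + ep) * E2 * Q2) by (unfold W; ring).
    eapply Rle_trans; [apply Rabs_triang|].
    eapply Rle_trans; [apply Rplus_le_compat_r; apply Rabs_triang|].
    eapply Rle_trans; [apply Rplus_le_compat_r; apply Rplus_le_compat_r; apply Rabs_triang|].
    rewrite !Rabs_Ropp. lra. }
  assert (HW2 : Rabs W <= ((1 + ep) + ep * Cp + 2 * Cq1 + 2 * (1 + ep) * Cq2) * (Rabs s + Rabs t)).
  { eapply Rle_trans; [apply HW|].
    assert (0 <= ep * Cp) by (apply Rmult_le_pos; lra).
    assert (0 <= 2 * (1 + ep) * Cq2) by (apply Rmult_le_pos; lra).
    assert (ep * Cp * Rabs s <= ep * Cp * (Rabs s + Rabs t)) by (apply Rmult_le_compat_l; lra).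
    assert (2 * Cq1 * Rabs s <= 2 * Cq1 * (Rabs s + Rabs t)) by (apply Rmult_le_compat_l; lra).
    assert (2 * (1 + ep) * Cq2 * Rabs t <= 2 * (1 + ep) * Cq2 * (Rabs s + Rabs t)) by (apply Rmult_le_compat_l; lra).
    lra. }
  eapply Rle_trans; [apply Rabs_triang|].
  eapply Rle_trans; [apply Rplus_le_compat_r; apply Rabs_triang|].
  rewrite !Rabs_Ropp, Rabs_mult.
  assert (Rabs be * Rabs W <= Rabs be * (((1 + ep) + ep * Cp + 2 * Cq1 + 2 * (1 + ep) * Cq2) * (Rabs s + Rabs t)))
    by (apply Rmult_le_compat_l; auto).
  assert (Cp * Rabs s <= Cp * (Rabs s + Rabs t)) by (apply Rmult_le_compat_l; lra).
  lra.
Qed.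
Theorem lemma2 (A : R) (k1 k2 mu1 mu2 g1 g2 : R -> R) (z1 z2 eps beta x1 : R) :
  0 < A ->
  cont_on_0A A k1 -> cont_on_0A A k2 ->
  cont_on_0A A mu1 -> cont_on_0A A mu2 ->
  cont_on_0A A g1 -> cont_on_0A A g2 ->
  (forall x, 0 <= x <= A -> 0 <= k1 x /\ 0 <= k2 x /\ 0 <= mu1 x /\ 0 <= mu2 x
                            /\ 0 <= g1 x /\ 0 <= g2 x) ->
  0 < RInt k1 0 A -> 0 < RInt k2 0 A ->
  0 < RInt mu1 0 A -> 0 < RInt mu2 0 A ->
  0 < RInt g1 0 A -> 0 < RInt g2 0 A ->
  0 < z1 -> RInt (fun a => k1 a * surv z1 mu1 a) 0 A = 1 ->
  0 < z2 -> RInt (fun a => k2 a * surv z2 mu2 a) 0 A = 1 ->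
  0 < eps -> eps / (4 * (1 + eps)) < beta ->
  let gam1 := Ggamma A g1 z2 mu2 in
  let gam2 := Ggamma A g2 z1 mu1 in
  1 / (z2 * gam2) < x1 ->
  let a := 1 / (x1 * gam2) in
  let b := z1 - z2 + a in
  0 < b ->
  let x2 := b / gam1 in
  let r := fun eta1 eta2 : R =>
    sqrt ((a * (1 - exp (- eta1))) ^ 2 + (b * (exp eta2 - 1)) ^ 2) in
  let Du := fun eta1 eta2 e1 e2 : R =>
    uhat A k1 k2 mu1 mu2 g1 g2 z1 z2 beta eps x1 x2 eta1 eta2 e1 e2
    - uhat A k1 k2 mu1 mu2 g1 g2 z1 z2 beta eps x1 x2 eta1 eta2 0 0 in
  forall delta : R, 0 < delta ->
  forall Rr : R, 0 < Rr -> Rr < Rmin a b ->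
  exists C : R, 0 < C /\
    forall eta1 eta2 e1 e2 : R,
      r eta1 eta2 <= Rr ->
      Rabs e1 + Rabs e2 <= delta ->
      Rabs (Du eta1 eta2 e1 e2) <= C * (Rabs e1 + Rabs e2).
Proof.
  intros HA Hk1 Hk2 Hm1 Hm2 Hg1 Hg2 Hnn Ik1 Ik2 Im1 Im2 Ig1 Ig2 Hz1 Hn1 Hz2 Hn2 Heps Hbeta
    gam1 gam2 Hx1 a b Hb x2 r Du delta Hd Rr HR HRr.
  assert (nk1 : forall x, 0 <= x <= A -> 0 <= k1 x) by (intros; apply Hnn; auto).
  assert (nk2 : forall x, 0 <= x <= A -> 0 <= k2 x) by (intros; apply Hnn; auto).
  assert (ng1 : forall x, 0 <= x <= A -> 0 <= g1 x) by (intros; apply Hnn; auto).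
  assert (ng2 : forall x, 0 <= x <= A -> 0 <= g2 x) by (intros; apply Hnn; auto).
  assert (LG2 : Lip delta (fun s => Ggamma A g2 (z1 - s) mu1)).
  { unfold Ggamma. apply (G_lip A mu1 g2 (fun y => g2 (cl A y))); auto; intros; first [ rewrite cl_id by lra; reflexivity | cont ]. }
  assert (LG1 : Lip delta (fun s => Ggamma A g1 (z2 - s) mu2)).
  { unfold Ggamma. apply (G_lip A mu2 g1 (fun y => g1 (cl A y))); auto; intros; first [ rewrite cl_id by lra; reflexivity | cont ]. }
  assert (LK1 : Lip delta (fun s => Gkappa A k1 mu1 (z1 - s))).
  { unfold Gkappa. apply (G_lip A mu1 (fun y => y * k1 y) (fun y => y * k1 (cl A y))); auto; intros; first [ rewrite cl_id by lra; reflexivity | cont ]. }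
  assert (LK2 : Lip delta (fun s => Gkappa A k2 mu2 (z2 - s))).
  { unfold Gkappa. apply (G_lip A mu2 (fun y => y * k2 y) (fun y => y * k2 (cl A y))); auto; intros; first [ rewrite cl_id by lra; reflexivity | cont ]. }
  assert (LI1 : Lip delta (fun s => inner A (Gpi A k1 mu1 (z1 - s)) (surv z1 mu1))) by (apply I_lip; auto).
  assert (LI2 : Lip delta (fun s => inner A (Gpi A k2 mu2 (z2 - s)) (surv z2 mu2))) by (apply I_lip; auto).
  destruct (G_low A mu1 g2 (fun y => g2 (cl A y)) z1 delta) as [mG2 [HmG2 BG2]]; auto; try (intros; first [ rewrite cl_id by lra; reflexivity | cont ]).
  destruct (G_low A mu2 (fun y => y * k2 y) (fun y => y * k2 (cl A y)) z2 delta) as [mK2 [HmK2 BK2]]; auto;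
    try (intros; first [ rewrite cl_id by lra; reflexivity | cont ]);
    [intros; pose proof (nk2 x H); nra | apply K_pos; auto |].
  destruct (I_low A k1 mu1 z1 delta) as [mI1 [HmI1 BI1]]; auto; [rewrite Hn1; lra|].
  destruct (I_low A k2 mu2 z2 delta) as [mI2 [HmI2 BI2]]; auto; [rewrite Hn2; lra|].
  assert (Hgam2 : 0 < gam2).
  { unfold gam2. rewrite <- (Rminus_0_r z1). apply Rlt_le_trans with mG2; auto.
    apply (BG2 0). rewrite Rabs_R0; lra. }
  assert (Hx1p : 0 < x1).
  { eapply Rlt_trans; [|apply Hx1]. unfold Rdiv. rewrite Rmult_1_l. apply Rinv_0_lt_compat.
    apply Rmult_lt_0_compat; auto. }
  set (p := fun s => / (x1 * Ggamma A g2 (z1 - s) mu1)).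
  set (q1 := fun s => Gkappa A k1 mu1 (z1 - s) *
       / (Ggamma A g2 (z1 - s) mu1 * inner A (Gpi A k1 mu1 (z1 - s)) (surv z1 mu1) * x1)).
  set (q2 := fun t => Ggamma A g1 (z2 - t) mu2 * inner A (Gpi A k2 mu2 (z2 - t)) (surv z2 mu2) * x2
       * / Gkappa A k2 mu2 (z2 - t)).
  assert (Lp : Lip delta p).
  { unfold p. apply (Lip_inv delta (fun s => x1 * Ggamma A g2 (z1 - s) mu1) (x1 * mG2)); try lra.
    - apply Rmult_lt_0_compat; auto.
    - apply (Lip_mult delta (fun _ => x1) (fun s => Ggamma A g2 (z1 - s) mu1)); auto. apply Lip_const.
    - intros e He. specialize (BG2 e He). unfold Ggamma in *.
      rewrite Rabs_right by (apply Rle_ge; apply Rmult_le_pos; lra).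
      apply Rmult_le_compat_l; lra. }
  assert (Lq1 : Lip delta q1).
  { unfold q1. apply (Lip_mult delta (fun s => Gkappa A k1 mu1 (z1 - s))
        (fun s => / (Ggamma A g2 (z1 - s) mu1 * inner A (Gpi A k1 mu1 (z1 - s)) (surv z1 mu1) * x1))); auto.
    apply (Lip_inv delta (fun s => Ggamma A g2 (z1 - s) mu1 * inner A (Gpi A k1 mu1 (z1 - s)) (surv z1 mu1) * x1)
       (mG2 * mI1 * x1)); try lra.
    - repeat apply Rmult_lt_0_compat; auto.
    - apply (Lip_mult delta (fun s => Ggamma A g2 (z1 - s) mu1 * inner A (Gpi A k1 mu1 (z1 - s)) (surv z1 mu1)) (fun _ => x1)); auto; [|apply Lip_const].
      apply (Lip_mult delta (fun s => Ggamma A g2 (z1 - s) mu1) (fun s => inner A (Gpi A k1 mu1 (z1 - s)) (surv z1 mu1))); auto.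
    - intros e He. specialize (BG2 e He). specialize (BI1 e He). unfold Ggamma in *.
      rewrite Rabs_right by (apply Rle_ge; repeat apply Rmult_le_pos; lra).
      apply Rmult_le_compat_r; [lra|]. apply Rmult_le_compat; lra. }
  assert (Lq2 : Lip delta q2).
  { unfold q2. apply (Lip_mult delta (fun t => Ggamma A g1 (z2 - t) mu2 * inner A (Gpi A k2 mu2 (z2 - t)) (surv z2 mu2) * x2)
        (fun t => / Gkappa A k2 mu2 (z2 - t))); auto.
    - apply (Lip_mult delta (fun t => Ggamma A g1 (z2 - t) mu2 * inner A (Gpi A k2 mu2 (z2 - t)) (surv z2 mu2)) (fun _ => x2)); auto; [|apply Lip_const].
      apply (Lip_mult delta (fun t => Ggamma A g1 (z2 - t) mu2) (fun t => inner A (Gpi A k2 mu2 (z2 - t)) (surv z2 mu2))); auto.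
    - apply (Lip_inv delta (fun t => Gkappa A k2 mu2 (z2 - t)) mK2); auto; try lra.
      intros e He. specialize (BK2 e He). unfold Gkappa. rewrite Rabs_right; lra. }
  destruct Lp as [Cp [HCp Hp]]. destruct Lq1 as [Cq1 [HCq1 Hq1]]. destruct Lq2 as [Cq2 [HCq2 Hq2]].
  exists (1 + Cp + Rabs beta * ((1 + eps) + eps * Cp + 2 * Cq1 + 2 * (1 + eps) * Cq2)).
  split.
  { pose proof (Rabs_pos beta).
    assert (0 <= (1 + eps) + eps * Cp + 2 * Cq1 + 2 * (1 + eps) * Cq2).
    { assert (0 <= eps * Cp) by (apply Rmult_le_pos; lra).
      assert (0 <= 2 * (1 + eps) * Cq2) by (apply Rmult_le_pos; lra). lra. }
    assert (0 <= Rabs beta * ((1 + eps) + eps * Cp + 2 * Cq1 + 2 * (1 + eps) * Cq2)) by (apply Rmult_le_pos; lra).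
    lra. }
  intros eta1 eta2 e1 e2 Hr He.
  assert (He1 : Rabs e1 <= delta) by (pose proof (Rabs_pos e2); lra).
  assert (He2 : Rabs e2 <= delta) by (pose proof (Rabs_pos e1); lra).
  assert (Ha : Rr < a) by (pose proof (Rmin_l a b); lra).
  assert (Hbb : Rr < b) by (pose proof (Rmin_r a b); lra).
  assert (HX : forall X Y : R, Rabs X <= sqrt (X ^ 2 + Y ^ 2)).
  { intros X Y. rewrite <- sqrt_Rsqr_abs. apply sqrt_le_1_alt. unfold Rsqr. simpl. nra. }
  assert (HE1 : exp (- eta1) <= 2).
  { pose proof (HX (a * (1 - exp (- eta1))) (b * (exp eta2 - 1))).
    unfold r in Hr.
    assert (- (a * (1 - exp (- eta1))) <= Rabs (a * (1 - exp (- eta1)))) by (rewrite <- Rabs_Ropp; apply RRle_abs).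
    nra. }
  assert (HE2 : exp eta2 <= 2).
  { pose proof (HX (b * (exp eta2 - 1)) (a * (1 - exp (- eta1)))).
    unfold r in Hr. rewrite Rplus_comm in Hr.
    assert (b * (exp eta2 - 1) <= Rabs (b * (exp eta2 - 1))) by apply RRle_abs.
    nra. }
  assert (Eq : Du eta1 eta2 e1 e2 = - e2 + - (p e1 - p 0) + beta * ((1 + eps) * (e1 - e2) - eps * (p e1 - p 0)
     - exp (- eta1) * (q1 e1 - q1 0) + (1 + eps) * exp eta2 * (q2 e2 - q2 0))).
  { unfold Du, uhat, p, q1, q2. cbv beta zeta. unfold Rdiv. ring. }
  rewrite Eq. apply final_ineq; auto; try lra; try (split; [apply exp_pos | lra]).
Qed.
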